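(* Let $\mathcal G$ be an input-output network with input nodes $\iota_1,\dots,\iota_n$ and output node $o$. Partition the remaining nodes into: $\sigma$-nodes (upstream from $o$ and downstream from at least one input node), $d$-nodes (not downstream from any input node), and $u$-nodes (downstream from at least one input node but not upstream from $o$). Consider an admissible system of the form $$\dot x_{\iota_m}=f_{\iota_m}(x_{\iota},x_\sigma,x_d,x_o,\mathcal I)\ (m=1,\dots,n),\quad \dot x_\sigma=f_\sigma(x_\iota,x_\sigma,x_d,x_o),\quad \dot x_u=f_u(x_\iota,x_\sigma,x_u,x_d,x_o),$$ $$\dot x_d=f_d(x_d),\quad \dot x_o=f_o(x_\iota,x_\sigma,x_d,x_o),$$ where $x_\iota=(x_{\iota_1},\dots,x_{\iota_n})$. Suppose $X_0=(x_\iota^*,x_\sigma^*,x_u^*,x_d^*,x_o^* )$ is a linearly stable equilibrium of this system (for some fixed value of $\mathcal I$). Then the core admissible system obtained by freezing $x_d$ at $x_d^*$, $$\dot x_{\iota_m}=f_{\iota_m}(x_\iota,x_\sigma,x_d^*,x_o,\mathcal I),\quad \dot x_\sigma=f_\sigma(x_\iota,x_\sigma,x_d^*,x_o),\quad \dot x_o=f_o(x_\iota,x_\sigma,x_d^*,x_o),$$ has a linearly stable equilibrium at $Y_0=(x_\iota^*,x_\sigma^*,x_o^* )$ (for the same value of $\mathcal I$).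
   Context: A node $b$ is downstream from a node $a$ (and $a$ upstream from $b$) if there is a directed path from $a$ to $b$; every node is upstream and downstream from itself. An admissible system assigns a real variable to each node, is smooth, only the input-node equations depend on the scalar input parameter $\mathcal I$, and $\partial f_j/\partial x_\ell\equiv0$ unless there is an arrow $\ell\to j$. An equilibrium is linearly stable if all eigenvalues of the Jacobian there have negative real part. *)

(* Defs.v *)
From HB Require Import structures.
From mathcomp Require Import all_boot all_order all_algebra.
From mathcomp Require Import all_classical all_reals all_analysis.
From mathcomp Require Import complex.
Import Order.TTheory GRing.Theory Num.Theory.

Set Implicit Arguments.
Unset Strict Implicit.
Unset Printing Implicit Defensive.

Local Open Scope ring_scope.

(** * Networks
   A network on [N] nodes (the nodes are ['I_N]) is given by an arrow
   relation [e : rel 'I_N]; [e l j] means there is an arrow [l -> j]. *)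

Definition downstream (N : nat) (e : rel 'I_N) (a b : 'I_N) : bool :=
  connect e a b.

Definition other_node N (ins : {set 'I_N}) (o : 'I_N) (j : 'I_N) : bool :=
  (j \notin ins) && (j != o).

Definition reached_by_input N (e : rel 'I_N) (ins : {set 'I_N}) (j : 'I_N) : bool :=
  [exists i in ins, downstream e i j].

Definition sigma_node N (e : rel 'I_N) (ins : {set 'I_N}) (o j : 'I_N) : bool :=
  other_node ins o j && downstream e j o && reached_by_input e ins j.

Definition d_node N (e : rel 'I_N) (ins : {set 'I_N}) (o j : 'I_N) : bool :=
  other_node ins o j && ~~ reached_by_input e ins j.

Definition u_node N (e : rel 'I_N) (ins : {set 'I_N}) (o j : 'I_N) : bool :=
  other_node ins o j && reached_by_input e ins j && ~~ downstream e j o.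

Definition core_nodes N (e : rel 'I_N) (ins : {set 'I_N}) (o : 'I_N) : {set 'I_N} :=
  [set j | (j \in ins) || sigma_node e ins o j || (j == o)].

(** * Vector fields
   A system on [N] nodes with scalar input parameter is
   [f : 'I_N -> 'rV[R]_N -> R -> R]: [f j x I] is the right-hand side of
   [dx_j/dt] at state [x] and input value [I]. *)

Definition jacobian (R : realType) (N : nat) (f : 'I_N -> 'rV[R]_N -> R -> R)
  (x : 'rV[R]_N) (I : R) : 'M[R]_N :=
  \matrix_(j, l) ('D_(delta_mx 0 l) (fun y : 'rV[R]_N => f j y I) x : R).

Definition equilibrium (R : realType) (N : nat) (f : 'I_N -> 'rV[R]_N -> R -> R)
  (x : 'rV[R]_N) (I : R) : Prop :=
  forall j, f j x I = 0.

Definition complexify (R : realType) (N : nat) (A : 'M[R]_N) : 'M[R[i]]_N :=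
  map_mx (fun r : R => Complex r 0) A.

Definition linearly_stable (R : realType) (N : nat) (f : 'I_N -> 'rV[R]_N -> R -> R)
  (x : 'rV[R]_N) (I : R) : Prop :=
  equilibrium f x I /\
  forall lam : R[i], eigenvalue (complexify (jacobian f x I)) lam -> complex.Re lam < 0.

(** Admissibility of [f] for the network [e] with input nodes [ins].
    "Smooth" is rendered as: differentiable in the state everywhere. *)
Definition admissible (R : realType) (N : nat) (e : rel 'I_N) (ins : {set 'I_N})
  (f : 'I_N -> 'rV[R]_N -> R -> R) : Prop :=
  (forall j I x, differentiable (fun y : 'rV[R]_N => f j y I) x) /\
  (forall j, j \notin ins -> forall x I I', f j x I = f j x I') /\
  (forall j l, l != j -> ~~ e l j ->
     forall x I, 'D_(delta_mx 0 l) (fun y : 'rV[R]_N => f j y I) x = 0).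

(** * The core system obtained by freezing the non-core coordinates
   at those of [X0] (in particular x_d at its equilibrium value). *)
Definition core_ext (R : realType) (N : nat) (C : {set 'I_N}) (X0 : 'rV[R]_N)
  (y : 'rV[R]_#|C|) : 'rV[R]_N :=
  \row_i (match [pick c : 'I_#|C| | enum_val c == i] with
          | Some c => y 0 c
          | None => X0 0 i
          end).

Definition core_system (R : realType) (N : nat) (C : {set 'I_N}) (X0 : 'rV[R]_N)
  (f : 'I_N -> 'rV[R]_N -> R -> R) : 'I_#|C| -> 'rV[R]_#|C| -> R -> R :=
  fun c y I => f (enum_val c) (@core_ext R N C X0 y) I.

Definition core_point (R : realType) (N : nat) (C : {set 'I_N}) (X0 : 'rV[R]_N)
  : 'rV[R]_#|C| :=
  \row_c X0 0 (enum_val c).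

(* Main.v *)
Require Import Defs.
From HB Require Import structures.
From mathcomp Require Import all_boot all_order all_algebra.
From mathcomp Require Import all_classical all_reals all_analysis.
From mathcomp Require Import complex.
Import Order.TTheory GRing.Theory Num.Theory.
Local Open Scope ring_scope.

Lemma eig_det (F : fieldType) n (A : 'M[F]_n) a :
  eigenvalue A a = (\det (a%:M - A) == 0).
Proof.
  apply/eigenvalueP/det0P=> [[v Av_av v_nz] | [v v_nz Av_av]]; exists v => //.
    by rewrite mulmxBr Av_av mul_mx_scalar subrr.
  by apply/eqP; rewrite -mul_mx_scalar eq_sym -subr_eq0 -mulmxBr Av_av.
Qed.

Lemma eig_tr (F : fieldType) n (A : 'M[F]_n) a :
  eigenvalue A^T a = eigenvalue A a.
Proof.
rewrite !eig_det -det_tr; congr (\det _ == 0); apply/matrixP => i j.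
by rewrite !mxE eq_sym.
Qed.

Lemma eig_sub (F : fieldType) m n (A : 'M[F]_n) (h : 'I_m -> 'I_n) a :
  injective h ->
  (forall i l, (forall k, h k != l) -> A (h i) l = 0) ->
  eigenvalue (\matrix_(i, j) A (h i) (h j)) a -> eigenvalue A a.
Proof.
move=> hinj hz /eigenvalueP [v Hv nz].
pose P : 'M[F]_(m, n) := \matrix_(k, l) (h k == l)%:R.
have PA : P *m A = (\matrix_(i, j) A (h i) (h j)) *m P.
  apply/matrixP => k l; rewrite !mxE.
  rewrite (bigD1 (h k)) //= big1 => [|j hj]; last by rewrite mxE eq_sym (negPf hj) mul0r.
  rewrite !mxE eqxx mul1r addr0.
  case: (pickP (fun j => h j == l)) => [j /eqP <-|none].
    rewrite (bigD1 j) //= big1 => [|j' jj]; last first.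
      by rewrite !mxE (inj_eq hinj) (negPf jj) mulr0.
    by rewrite !mxE eqxx mulr1 addr0.
  rewrite big1; last by move=> j _; rewrite !mxE none mulr0.
  by rewrite hz // => j; rewrite none.
apply/eigenvalueP; exists (v *m P).
  by rewrite -mulmxA PA mulmxA Hv scalemxAl.
apply: contra nz => /eqP vP0; apply/eqP/matrixP => i j.
have := congr1 (fun w : 'rV_n => w i (h j)) vP0 => /=.
rewrite !mxE (bigD1 j) //= big1 => [|k kj]; last by rewrite !mxE (inj_eq hinj) (negPf kj) mulr0.
rewrite !mxE eqxx mulr1 addr0 => <-; by rewrite (ord1 i).
Qed.

Section An.
Variable R : realType.

Lemma derive_eq m n (g1 : 'rV[R]_m -> R) (g2 : 'rV[R]_n -> R) a v b w :
  (forall h : R, g1 (h *: v + a) = g2 (h *: w + b)) ->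
  'D_v g1 a = 'D_w g2 b.
Proof.
move=> H; have H0 := H 0; rewrite !scale0r !add0r in H0.
rewrite /derive.
have -> : (fun h : R => h^-1 *: ((g1 \o shift a) (h *: v) - g1 a)) =
          (fun h : R => h^-1 *: ((g2 \o shift b) (h *: w) - g2 b)).
  by apply/funext => h; rewrite /= /shift H H0.
by [].
Qed.

Lemma derive_zero n (g : 'rV[R]_n -> R) a v :
  (forall h : R, g (h *: v + a) = g a) -> 'D_v g a = 0.
Proof.
move=> H; rewrite /derive.
have -> : (fun h : R => h^-1 *: ((g \o shift a) (h *: v) - g a)) = cst 0.
  by apply/funext => h; rewrite /= /shift H subrr scaler0.
exact: lim_cst.
Qed.
End An.

Lemma notd_of_C N (e : rel 'I_N) ins o j :
  j \in core_nodes e ins o -> ~~ d_node e ins o j.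
Proof.
rewrite /core_nodes inE /d_node /sigma_node /other_node.
by case: (j \in ins); case: (j == o); case: (reached_by_input e ins j);
   case: (downstream e j o).
Qed.

Lemma u_of N (e : rel 'I_N) ins o l :
  l \notin core_nodes e ins o -> ~~ d_node e ins o l -> u_node e ins o l.
Proof.
rewrite /core_nodes inE /d_node /u_node /sigma_node /other_node.
by case: (l \in ins); case: (l == o); case: (reached_by_input e ins l);
   case: (downstream e l o).
Qed.

Lemma core_ext_line (R : realType) N (C : {set 'I_N}) (X0 : 'rV[R]_N)
  (c' : 'I_#|C|) (h : R) :
  core_ext X0 (h *: delta_mx 0 c' + core_point C X0) =
  h *: delta_mx 0 (enum_val c') + X0.
Proof.
apply/rowP => i; rewrite !mxE; case: pickP => [c /eqP <-|none].
  by rewrite !mxE (inj_eq enum_val_inj).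
  by rewrite eq_sym none mulr0 add0r.
Qed.

Theorem lemma3p1 (R : realType) (N : nat) (e : rel 'I_N)
  (ins : {set 'I_N}) (o : 'I_N)
  (f : 'I_N -> 'rV[R]_N -> R -> R) (X0 : 'rV[R]_N) (I0 : R) :
  (0 < #|ins|)%N ->
  o \notin ins ->
  admissible e ins f ->
  (* form of the system: core equations (inputs, sigma, output) do not
     depend on the u-variables *)
  (forall j, j \in core_nodes e ins o ->
     forall (x y : 'rV[R]_N) (I : R), (forall l, ~~ u_node e ins o l -> x 0 l = y 0 l) ->
       f j x I = f j y I) ->
  (* d-equations depend only on the d-variables *)
  (forall j, d_node e ins o j ->
     forall (x y : 'rV[R]_N) (I : R), (forall l, d_node e ins o l -> x 0 l = y 0 l) ->
       f j x I = f j y I) ->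
  linearly_stable f X0 I0 ->
  linearly_stable (@core_system R N (core_nodes e ins o) X0 f)
    (@core_point R N (core_nodes e ins o) X0) I0.
Proof.
move=> _ _ _ Hcore Hd [Heq Hstab].
set C := core_nodes e ins o.
have ext0 : core_ext X0 (core_point C X0) = X0.
  by apply/rowP => i; rewrite !mxE; case: pickP => [c /eqP <-|]; rewrite ?mxE.
split.
  by move=> c; rewrite /core_system ext0 Heq.
set J := Defs.jacobian f X0 I0.
have coreJ : Defs.jacobian (@core_system R N C X0 f) (core_point C X0) I0 =
             \matrix_(i, j) J (enum_val i) (enum_val j).
  apply/matrixP => i j; rewrite !mxE /core_system.
  apply: derive_eq => h; by rewrite core_ext_line.
set K := complexify J.
have Kz : forall j l, (forall h : R, f j (h *: delta_mx 0 l + X0) I0 = f j X0 I0) ->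
    K j l = 0.
  by move=> j l H; rewrite /K /complexify /J !mxE (@derive_zero R _ _ _ _ H).
move=> lam; rewrite coreJ => Hlam; apply: Hstab.
have oC : o \in C by rewrite /C /core_nodes inE eqxx !orbT.
set S := [set j | (j \in C) || d_node e ins o j].
have CS : forall j, j \in C -> j \in S by move=> j jC; rewrite inE jC.
have oS : o \in S by apply: CS.
pose h1 : 'I_#|S| -> 'I_N := enum_val.
pose h2 : 'I_#|C| -> 'I_#|S| := fun c => enum_rank_in oS (enum_val c).
have h12 : forall c, h1 (h2 c) = enum_val c.
  by move=> c; rewrite /h1 /h2 enum_rankK_in // CS // enum_valP.
have h2inj : injective h2.
  by move=> c c' E; apply: enum_val_inj; rewrite -!h12 E.
set MS := \matrix_(i, j) K (h1 i) (h1 j).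
have step1 : eigenvalue MS lam.
  rewrite -eig_tr; apply: (@eig_sub _ _ _ MS^T h2 lam h2inj).
    move=> i l nl; rewrite mxE /MS mxE h12.
    have lC : h1 l \notin C.
      apply/negP => lC; have := nl (enum_rank_in lC (h1 l)).
      by rewrite /h2 enum_rankK_in // /h1 enum_valK_in eqxx.
    have ld : d_node e ins o (h1 l).
      by have := enum_valP l; rewrite inE (negPf lC).
    apply: Kz => h; apply: Hd => // l' dl'.
    rewrite !mxE; case: (eqVneq (enum_val i) l') => [E|]; last by rewrite mulr0 add0r.
    by move: dl'; rewrite -E (negPf (@notd_of_C _ _ _ _ _ (enum_valP i))).
  rewrite -eig_tr; move: Hlam; congr (eigenvalue _ lam).
  by apply/matrixP => i j; rewrite !mxE h12 h12.
have step2 : eigenvalue K lam.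
  apply: (@eig_sub _ _ _ K h1 lam (@enum_val_inj _ S) _ step1) => i l nl.
  have lS : l \notin S.
    apply/negP => lS; have := nl (enum_rank_in lS l).
    by rewrite /h1 enum_rankK_in // eqxx.
  have lC : l \notin C by apply: contra lS; apply: CS.
  have ld : ~~ d_node e ins o l by move: lS; rewrite inE negb_or => /andP[].
  have := enum_valP i; rewrite inE => /orP [iC|id].
    apply: Kz => h; apply: Hcore => // l' ul'.
    rewrite !mxE; case: (eqVneq l l') => [E|]; last by rewrite mulr0 add0r.
    by move: ul'; rewrite -E (@u_of _ _ _ _ _ lC ld).
  apply: Kz => h; apply: Hd => // l' dl'.
  rewrite !mxE; case: (eqVneq l l') => [E|]; last by rewrite mulr0 add0r.
  by move: dl'; rewrite -E (negPf ld).
by [].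
Qed.
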